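(* Let $H_1,H_2$ be separable Hilbert spaces, $K\in B(H_1)$ and $L\in B(H_2)$. Then there exist a $K$-frame $\{x_n\}_{n\geqslant1}$ for $H_1$ and an $L$-frame $\{y_n\}_{n\geqslant1}$ for $H_2$ such that $\{x_n\oplus y_n\}_{n\geqslant1}$ is a $K\oplus L$-frame for $H_1\oplus H_2$.
   Context: $H_1\oplus H_2$ is the Hilbert space of pairs $x\oplus y$ with inner product $\langle x\oplus y,a\oplus b\rangle=\langle x,a\rangle+\langle y,b\rangle$. $K\oplus L\in B(H_1\oplus H_2)$ is defined by $(K\oplus L)(x\oplus y)=K(x)\oplus L(y)$. For a Hilbert space $H$ and $K\in B(H)$, a sequence $\{z_n\}_{n\geqslant1}$ in $H$ is a $K$-frame if there are $A,B>0$ with $A\|K^*z\|^2\leq\sum_{n=1}^\infty|\langle z,z_n\rangle|^2\leq B\|z\|^2$ for all $z\in H$. *)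

(* Defs.v *)
From HB Require Import structures.
From mathcomp Require Import all_boot all_order all_algebra.
From mathcomp Require Import all_classical all_reals all_analysis.
From mathcomp Require Import complex.
Set Implicit Arguments. Unset Strict Implicit. Unset Printing Implicit Defensive.
Import Order.TTheory GRing.Theory Num.Theory.
Local Open Scope ring_scope.

Section Hilbert.
Variable R : realType.
Local Notation C := R[i].
Variable V : lmodType C.
(* inner product, linear in the first argument *)
Variable ip : V -> V -> C.

(* squared norm ||x||^2 = <x,x> (a nonnegative real) *)
Definition nsq (x : V) : R := complex.Re (ip x x).

Definition inner_product : Prop :=
  [/\ (forall (a : C) (x y z : V), ip (a *: x + y) z = a * ip x z + ip y z),
      (forall x y : V, ip y x = conjc (ip x y)),
      (forall x : V, 0 <= nsq x) &
      (forall x : V, nsq x = 0 -> x = 0)].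

Definition complete_ip : Prop :=
  forall u : nat -> V,
    (forall e : R, 0 < e -> exists N, forall m n, (N <= m)%N -> (N <= n)%N ->
        nsq (u m - u n) < e) ->
    exists l : V, forall e : R, 0 < e -> exists N, forall n, (N <= n)%N ->
        nsq (u n - l) < e.

Definition hilbert : Prop := inner_product /\ complete_ip.

Definition separable : Prop :=
  exists d : nat -> V, forall (x : V) (e : R), 0 < e -> exists n, nsq (x - d n) < e.

Definition bounded_op (K : V -> V) : Prop :=
  (forall (a : C) (x y : V), K (a *: x + y) = a *: K x + K y) /\
  exists M : R, forall x, nsq (K x) <= M * nsq x.

Definition is_adjoint (K Ks : V -> V) : Prop :=
  forall x y : V, ip (K x) y = ip x (Ks y).

(* sum_{n>=1} |<z, z_n>|^2 as an extended real (terms are nonnegative) *)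
Definition frame_sum (zs : nat -> V) (z : V) : \bar R :=
  (\sum_(n <oo) ((Normc.normc (ip z (zs n))) ^+ 2)%:E)%E.

(* {z_n} is a K-frame: A ||K^* z||^2 <= sum |<z,z_n>|^2 <= B ||z||^2;
   K^* is any (= the) adjoint of K *)
Definition Kframe (K : V -> V) (zs : nat -> V) : Prop :=
  exists A B : R, 0 < A /\ 0 < B /\
    forall z : V,
      (forall Ks, is_adjoint K Ks -> ((A * nsq (Ks z))%:E <= frame_sum zs z)%E) /\
      (frame_sum zs z <= (B * nsq z)%:E)%E.
End Hilbert.

Definition ip_sum (R : realType) (V1 V2 : lmodType R[i])
  (ip1 : V1 -> V1 -> R[i]) (ip2 : V2 -> V2 -> R[i]) : (V1 * V2)%type -> (V1 * V2)%type -> R[i] :=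
  fun p q => ip1 p.1 q.1 + ip2 p.2 q.2.

Definition op_sum (V1 V2 : Type) (K : V1 -> V1) (L : V2 -> V2) : (V1 * V2)%type -> (V1 * V2)%type :=
  fun p => (K p.1, L p.2).

(* Main.v *)
Require Import Defs.
From HB Require Import structures.
From mathcomp Require Import all_boot all_order all_algebra.
From mathcomp Require Import all_classical all_reals all_analysis.
From mathcomp Require Import complex.
From mathcomp Require Import ring lra.
Set Implicit Arguments. Unset Strict Implicit. Unset Printing Implicit Defensive.
Import Order.TTheory GRing.Theory Num.Theory.
Local Open Scope ring_scope.
Local Open Scope complex_scope.

Lemma normc2 (R : realType) (c : R[i]) :
  Normc.normc c ^+ 2 = complex.Re c ^+ 2 + complex.Im c ^+ 2.
Proof. by case: c => a b /=; rewrite sqr_sqrtr // addr_ge0 // sqr_ge0. Qed.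
Lemma mulcJ (R : realType) (c : R[i]) :
  c * conjc c = (Normc.normc c ^+ 2)%:C.
Proof.
rewrite normc2; case: c => a b /=; simpc.
by apply/eqP; rewrite eq_complex /= !expr2; apply/andP; split; apply/eqP; ring.
Qed.

Lemma ReD (R : realType) (x y : R[i]) : complex.Re (x + y) = complex.Re x + complex.Re y.
Proof. by case: x => a b; case: y. Qed.
Lemma ReN (R : realType) (x : R[i]) : complex.Re (- x) = - complex.Re x.
Proof. by case: x. Qed.
Lemma ReB (R : realType) (x y : R[i]) : complex.Re (x - y) = complex.Re x - complex.Re y.
Proof. by rewrite ReD ReN. Qed.
Lemma Re_sum (R : realType) (I : Type) (r : seq I) (P : pred I) (F : I -> R[i]) :
  complex.Re (\sum_(i <- r | P i) F i) = \sum_(i <- r | P i) complex.Re (F i).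
Proof. by apply: (big_morph (@complex.Re R)) => [x y|]; rewrite ?ReD. Qed.

Section IP.
Variable R : realType.
Local Notation C := R[i].
Variable V : lmodType C.
Variable ip : V -> V -> C.
Hypothesis hip : inner_product ip.
Local Notation nsq := (nsq ip).

Lemma ipDZl a x y z : ip (a *: x + y) z = a * ip x z + ip y z.
Proof. by case: hip. Qed.
Lemma ipC x y : ip y x = conjc (ip x y).
Proof. by case: hip. Qed.
Lemma nsq_ge0 x : 0 <= nsq x.
Proof. by case: hip. Qed.
Lemma nsq_eq0 x : nsq x = 0 -> x = 0.
Proof. by case: hip => _ _ _; apply. Qed.

Lemma ip0l z : ip 0 z = 0.
Proof.
have := ipDZl 1 0 0 z; rewrite scaler0 addr0 mul1r -{1}[ip 0 z]addr0.
by move/addrI.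
Qed.
Lemma ipDl x y z : ip (x + y) z = ip x z + ip y z.
Proof. by have := ipDZl 1 x y z; rewrite scale1r mul1r. Qed.
Lemma ipZl a x z : ip (a *: x) z = a * ip x z.
Proof. by have := ipDZl a x 0 z; rewrite addr0 ip0l addr0. Qed.
Lemma ipNl x z : ip (- x) z = - ip x z.
Proof. by rewrite -scaleN1r ipZl mulN1r. Qed.
Lemma ipBl x y z : ip (x - y) z = ip x z - ip y z.
Proof. by rewrite ipDl ipNl. Qed.
Lemma ip0r z : ip z 0 = 0.
Proof. by rewrite ipC ip0l conjc0. Qed.
Lemma ipDr x y z : ip z (x + y) = ip z x + ip z y.
Proof. by rewrite [LHS]ipC ipDl raddfD /= -!ipC. Qed.
Lemma ipZr a x z : ip z (a *: x) = conjc a * ip z x.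
Proof. by rewrite [LHS]ipC ipZl rmorphM /= -ipC. Qed.
Lemma ipNr x z : ip z (- x) = - ip z x.
Proof. by rewrite [LHS]ipC ipNl raddfN /= -ipC. Qed.
Lemma ipBr x y z : ip z (x - y) = ip z x - ip z y.
Proof. by rewrite ipDr ipNr. Qed.
Lemma ip_suml (I : Type) (r : seq I) (P : pred I) (F : I -> V) z :
  ip (\sum_(i <- r | P i) F i) z = \sum_(i <- r | P i) ip (F i) z.
Proof. by apply: (big_morph (ip^~ z)) => [x y|]; rewrite ?ipDl ?ip0l. Qed.
Lemma ip_sumr (I : Type) (r : seq I) (P : pred I) (F : I -> V) z :
  ip z (\sum_(i <- r | P i) F i) = \sum_(i <- r | P i) ip z (F i).
Proof. by apply: (big_morph (ip z)) => [x y|]; rewrite ?ipDr ?ip0r. Qed.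
Lemma ipxx x : ip x x = (nsq x)%:C.
Proof.
have := ipC x x; rewrite /Defs.nsq; case: (ip x x) => a b /= [hb].
have -> : b = 0 by lra.
by [].
Qed.
Lemma nsq0 : nsq 0 = 0.
Proof. by rewrite /Defs.nsq ip0l. Qed.

Definition proj (e : nat -> V) N u := \sum_(k < N) ip u (e k) *: e k.
Definition ON (e : nat -> V) N :=
  (forall j k, (j < N)%N -> (k < N)%N -> j != k -> ip (e j) (e k) = 0) /\
  (forall k, (k < N)%N -> e k = 0 \/ ip (e k) (e k) = 1).

Section Proj.
Variables (e : nat -> V) (N : nat).
Hypothesis hON : ON e N.

Lemma ip_proj_e u k : (k < N)%N -> ip (proj e N u) (e k) = ip u (e k).
Proof.
move=> kN; rewrite /proj ip_suml (bigD1 (Ordinal kN)) //= big1 ?addr0.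
  rewrite ipZl; case: hON => _ /(_ k kN) [->|->]; last by rewrite mulr1.
  by rewrite ip0r mul0r.
move=> j hj; rewrite ipZl (proj1 hON j k) ?mulr0 //.
Qed.

Lemma ip_res_e u k : (k < N)%N -> ip (u - proj e N u) (e k) = 0.
Proof. by move=> kN; rewrite ipBl ip_proj_e // subrr. Qed.

Lemma ip_res_proj u v : ip (u - proj e N u) (proj e N v) = 0.
Proof.
rewrite /proj ip_sumr big1 // => k _; rewrite ipZr ip_res_e ?mulr0 //.
Qed.

Let S u := \sum_(k < N) (Normc.normc (ip u (e k)) ^+ 2)%:C.

Lemma ip_proj_u u : ip (proj e N u) u = S u.
Proof.
rewrite /proj ip_suml; apply: eq_bigr => k _.
by rewrite ipZl [ip (e k) u]ipC mulcJ.
Qed.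

Lemma ip_u_proj u : ip u (proj e N u) = S u.
Proof.
rewrite ipC ip_proj_u /S rmorph_sum /=; apply: eq_bigr => k _.
by apply/eqP; rewrite eq_complex /= oppr0 !eqxx.
Qed.

Lemma ip_proj_proj u : ip (proj e N u) (proj e N u) = S u.
Proof.
have := ip_res_proj u u; rewrite ipBl ip_u_proj => /eqP.
by rewrite subr_eq0 => /eqP <-.
Qed.

Lemma bessel u :
  nsq (u - proj e N u) = nsq u - \sum_(k < N) Normc.normc (ip u (e k)) ^+ 2.
Proof.
have h : ip (u - proj e N u) (u - proj e N u) = ip u u - S u.
  by rewrite !ipBl !ipBr ip_u_proj ip_proj_u ip_proj_proj subrr subr0.
have := congr1 (@complex.Re R) h; rewrite /Defs.nsq => ->.
by rewrite /S ReB Re_sum.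
Qed.

Lemma bessel_le u : \sum_(k < N) Normc.normc (ip u (e k)) ^+ 2 <= nsq u.
Proof. by rewrite -subr_ge0 -bessel nsq_ge0. Qed.

Lemma projB u v : proj e N (u - v) = proj e N u - proj e N v.
Proof.
rewrite /proj -sumrB; apply: eq_bigr => k _; by rewrite ipBl scalerBl.
Qed.
End Proj.

Definition normalize (w : V) : V :=
  if nsq w == 0 then 0 else ((Num.sqrt (nsq w))^-1)%:C *: w.

Lemma sqrt_inv_mul (x : R) : x != 0 -> 0 <= x ->
  (Num.sqrt x)^-1 * ((Num.sqrt x)^-1 * x) = 1.
Proof.
move=> x0 xge; rewrite mulrA -expr2 exprVn sqr_sqrtr // mulVf //.
Qed.

Lemma normalize_orth w v : ip w v = 0 -> ip (normalize w) v = 0.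
Proof. by rewrite /normalize; case: ifP => _ h; rewrite ?ip0l // ipZl h mulr0. Qed.

Lemma normalize_unit w : normalize w = 0 \/ ip (normalize w) (normalize w) = 1.
Proof.
rewrite /normalize; case: ifP => h; [by left | right].
rewrite ipZl ipZr conjc_real ipxx -!rmorphM /= sqrt_inv_mul ?h ?nsq_ge0 //.
Qed.

Lemma normalize_rec w : ip w (normalize w) *: normalize w = w.
Proof.
rewrite /normalize; case: ifP => h.
  by rewrite scaler0 (nsq_eq0 (eqP h)).
rewrite ipZr scalerA conjc_real ipxx -!rmorphM /=.
have -> : (Num.sqrt (nsq w))^-1 * nsq w * (Num.sqrt (nsq w))^-1 = 1.
  by rewrite mulrC mulrA -mulrA sqrt_inv_mul ?h ?nsq_ge0.
by rewrite scale1r.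
Qed.

Section GS.
Variable d : nat -> V.

Fixpoint gsf (n : nat) : nat -> V :=
  if n is n'.+1 then
    (fun k => if (k < n')%N then gsf n' k
              else if k == n' then normalize (d n' - proj (gsf n') n' (d n'))
              else 0)
  else fun _ => 0.

Definition gs k := gsf k.+1 k.

Lemma gsf_gs n k : (k < n)%N -> gsf n k = gs k.
Proof.
elim: n k => [//|n IH] k hk /=.
case: ifP => [/IH //| /negbT]; rewrite -leqNgt => hnk.
have kn : k = n by apply/eqP; rewrite eqn_leq hnk -ltnS hk.
by subst k; rewrite eqxx /gs /= ltnn eqxx.
Qed.

Lemma gsE n : gs n = normalize (d n - proj gs n (d n)).
Proof.
rewrite {1}/gs /= ltnn eqxx; congr normalize; congr (_ - _).
by rewrite /proj; apply: eq_bigr => k _; rewrite gsf_gs.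
Qed.

Lemma gs_ON N : ON gs N.
Proof.
elim: N => [|n [IH1 IH2]]; first by split.
have orth : forall k, (k < n)%N -> ip (gs n) (gs k) = 0.
  by move=> k kn; rewrite gsE; apply: normalize_orth; apply: ip_res_e.
split.
  move=> j k hj hk hjk; rewrite ltnS leq_eqVlt in hj hk.
  move: hk; rewrite ltnS leq_eqVlt => hk.
  case/ssrbool.orP: hj => [/eqP ej|hj]; case/ssrbool.orP: hk => [/eqP ek|hk].
  - by rewrite ej ek eqxx in hjk.
  - by rewrite ej orth.
  - by rewrite ek ipC orth // conjc0.
  - by apply: IH1.
move=> k; rewrite ltnS leq_eqVlt; case/ssrbool.orP => [/eqP ->|kn]; last exact: IH2.
by rewrite gsE; apply: normalize_unit.
Qed.

Lemma gs_span n : d n - proj gs n.+1 (d n) = 0.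
Proof.
rewrite {1}/proj big_ord_recr /=.
have -> : \sum_(i < n) ip (d n) (gs i) *: gs i = proj gs n (d n) by [].
set w := d n - proj gs n (d n).
have hON : ON gs n := gs_ON n.
have hc : ip (d n) (gs n) = ip w (gs n).
  rewrite /w ipBl.
  have -> : ip (proj gs n (d n)) (gs n) = 0.
    rewrite ipC gsE normalize_orth ?conjc0 //.
    exact: ip_res_proj.
  by rewrite subr0.
by rewrite hc opprD addrA -/w gsE normalize_rec subrr.
Qed.

Lemma gs_span_ge n N : (n < N)%N -> proj gs N (d n) = d n.
Proof.
move=> nN.
have key : forall m, (n < m)%N -> nsq (d n - proj gs m (d n)) <= 0.
  elim=> [//|m IH]; rewrite ltnS leq_eqVlt; case/ssrbool.orP => [/eqP <-|hm].
    by rewrite gs_span nsq0.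
  apply: le_trans (IH hm); rewrite !(bessel (gs_ON _)) (big_ord_recr m) /=.
  by rewrite opprD addrA lerBlDr lerDl sqr_ge0.
have h := key N nN.
have h0 : nsq (d n - proj gs N (d n)) = 0.
  by apply/eqP; rewrite eq_le h nsq_ge0.
by have /eqP := nsq_eq0 h0; rewrite subr_eq0 => /eqP.
Qed.

Hypothesis dense : forall (x : V) (e : R), 0 < e -> exists n, nsq (x - d n) < e.

Lemma parseval z : frame_sum ip gs z = (nsq z)%:E.
Proof.
rewrite /frame_sum; apply/eqP; rewrite eq_le; apply/andP; split.
  apply: lime_le; first by apply: is_cvg_nneseries => *; rewrite lee_fin sqr_ge0.
  apply: nearW => N; rewrite big_mkord sumEFin lee_fin.
  exact: bessel_le (gs_ON N) z.
apply/lee_subgt0Pr => eps eps0.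
have [n hn] := dense z eps0.
apply: le_trans (nneseries_lim_ge n.+1 _); last by move=> *; rewrite lee_fin sqr_ge0.
rewrite big_mkord sumEFin -EFinB lee_fin lerBlDr -lerBlDl.
rewrite -(bessel (gs_ON _)).
have -> : z - proj gs n.+1 z = (z - d n) - proj gs n.+1 (z - d n).
  by rewrite projB gs_span_ge // opprB addrA subrK.
apply: le_trans (ltW hn).
by rewrite (bessel (gs_ON _)) lerBlDr lerDl sumr_ge0 // => k _; rewrite sqr_ge0.
Qed.
End GS.

Lemma cs a b : Normc.normc (ip a b) ^+ 2 <= nsq a * nsq b.
Proof.
have [hb|hb] := eqVneq (nsq b) 0.
  by rewrite (nsq_eq0 hb) ip0r Normc.normc0 expr0n /= nsq0 mulr0.
pose e := fun k : nat => if k == 0%N then normalize b else 0.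
have hON : ON e 1.
  split; first by move=> [|j] [|k].
  by move=> [|k] // _; rewrite /e /=; apply: normalize_unit.
have := bessel_le hON a; rewrite big_ord1 /e /= /normalize (negbTE hb).
rewrite ipZr conjc_real Normc.normcM exprMn normc2 /= expr0n /= addr0.
have hs : ((Num.sqrt (nsq b))^-1) ^+ 2 * nsq b = 1.
  by rewrite expr2 -mulrA sqrt_inv_mul ?nsq_ge0.
move=> h; have := ler_wpM2r (nsq_ge0 b) h; by rewrite (sqr_sqrtr (sqr_ge0 _)) mulrAC hs mul1r.
Qed.

Lemma adj_bound (K Ks : V -> V) (M : R) : 0 < M ->
  (forall x, nsq (K x) <= M * nsq x) -> is_adjoint ip K Ks ->
  forall z, nsq (Ks z) <= M * nsq z.
Proof.
move=> M0 hK hadj z; set y := Ks z.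
have hy : nsq y = complex.Re (ip (K y) z) by rewrite hadj -/y ipxx.
have h1 : nsq y ^+ 2 <= M * nsq y * nsq z.
  rewrite {1}hy; apply: (le_trans (y := Normc.normc (ip (K y) z) ^+ 2)).
    by rewrite normc2 lerDl sqr_ge0.
  apply: le_trans (cs _ _) _.
  by rewrite ler_wpM2r ?nsq_ge0 ?hK.
have [hy0|hy0] := eqVneq (nsq y) 0.
  by rewrite hy0 mulr_ge0 ?nsq_ge0 // ltW.
have hyp : 0 < nsq y by rewrite lt_neqAle eq_sym hy0 nsq_ge0.
by rewrite -(ler_pM2l hyp) -expr2 mulrA [nsq y * M]mulrC.
Qed.

Lemma bounded_pos K : bounded_op ip K ->
  exists M : R, 0 < M /\ forall x, nsq (K x) <= M * nsq x.
Proof.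
move=> [_ [M0 hM]]; exists (`|M0| + 1); split.
  by rewrite ltr_wpDl.
move=> x; apply: le_trans (hM x) _; rewrite ler_wpM2r ?nsq_ge0 //.
by apply: le_trans (ler_norm M0) _; rewrite lerDl.
Qed.

Lemma Kframe_of (e : nat -> V) K : bounded_op ip K ->
  (forall z, frame_sum ip e z = (nsq z)%:E) -> Kframe ip K e.
Proof.
move=> /bounded_pos [M [M0 hM]] hp; exists M^-1, 1; split; first by rewrite invr_gt0.
split=> // z; split; last by rewrite hp mul1r.
move=> Ks hKs; rewrite hp lee_fin mulrC ler_pdivrMr // mulrC.
exact: adj_bound hKs z.
Qed.

End IP.


Section Prod.
Variable R : realType.
Variables V1 V2 : lmodType R[i].
Variables (ip1 : V1 -> V1 -> R[i]) (ip2 : V2 -> V2 -> R[i]).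
Hypotheses (h1 : inner_product ip1) (h2 : inner_product ip2).
Local Notation ips := (ip_sum ip1 ip2).

Lemma nsq_sum (p : (V1 * V2)%type) : nsq ips p = nsq ip1 p.1 + nsq ip2 p.2.
Proof. by rewrite /Defs.nsq /ip_sum ReD. Qed.

Lemma ip_sum_ip : inner_product ips.
Proof.
split.
- move=> a x y z; rewrite /ip_sum /= (ipDZl h1) (ipDZl h2); ring.
- by move=> x y; rewrite /ip_sum raddfD /= -(ipC h1) -(ipC h2).
- by move=> x; rewrite nsq_sum addr_ge0 ?(nsq_ge0 h1) ?(nsq_ge0 h2).
- move=> [x1 x2]; rewrite nsq_sum /= => /eqP.
  rewrite paddr_eq0 ?(nsq_ge0 h1) ?(nsq_ge0 h2) // => /andP [/eqP e1 /eqP e2].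
  by rewrite (nsq_eq0 h1 e1) (nsq_eq0 h2 e2).
Qed.

Lemma sep_sum : separable ip1 -> separable ip2 -> separable ips.
Proof.
move=> [d1 hd1] [d2 hd2].
pose D n : (V1 * V2)%type :=
  if @unpickle (prod nat nat) n is Some ij then (d1 ij.1, d2 ij.2) else 0.
exists D => [[x1 x2]] e e0.
have e20 : 0 < e / 2 by rewrite divr_gt0.
have [i hi] := hd1 x1 _ e20; have [j hj] := hd2 x2 _ e20.
exists (pickle (i, j)); rewrite /D pickleK nsq_sum /=.
lra.
Qed.

Lemma bounded_sum K L : bounded_op ip1 K -> bounded_op ip2 L ->
  bounded_op ips (op_sum K L).
Proof.
move=> hK hL; split.
  by move=> a x y; rewrite /op_sum /= (proj1 hK) (proj1 hL).
have [M1 [M10 hM1]] := bounded_pos h1 hK.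
have [M2 [M20 hM2]] := bounded_pos h2 hL.
exists (M1 + M2) => [[x1 x2]]; rewrite !nsq_sum /=.
have := hM1 x1; have := hM2 x2; have := nsq_ge0 h1 x1; have := nsq_ge0 h2 x2.
nra.
Qed.
End Prod.

Theorem corollary2p6 (R : realType) (V1 V2 : lmodType R[i])
  (ip1 : V1 -> V1 -> R[i]) (ip2 : V2 -> V2 -> R[i])
  (H1 : hilbert ip1) (H2 : hilbert ip2)
  (S1 : separable ip1) (S2 : separable ip2)
  (K : V1 -> V1) (L : V2 -> V2)
  (hK : bounded_op ip1 K) (hL : bounded_op ip2 L) :
  exists (x : nat -> V1) (y : nat -> V2),
    [/\ Kframe ip1 K x, Kframe ip2 L y &
        Kframe (ip_sum ip1 ip2) (op_sum K L) (fun n => (x n, y n))].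
Proof.
have h1 := proj1 H1; have h2 := proj1 H2.
have hs := ip_sum_ip h1 h2.
have [D hD] := sep_sum S1 S2.
pose g := gs (ip_sum ip1 ip2) D.
have hp := parseval hs hD.
exists (fun n => (g n).1), (fun n => (g n).2); split.
- apply: (Kframe_of h1 hK) => z.
  have <- : frame_sum (ip_sum ip1 ip2) g (z, 0) = frame_sum ip1 (fun n => (g n).1) z.
    by apply: eq_eseriesr => n _; rewrite /ip_sum /= (ip0l h2) addr0.
  by rewrite hp nsq_sum /= (nsq0 h2) addr0.
- apply: (Kframe_of h2 hL) => z.
  have <- : frame_sum (ip_sum ip1 ip2) g (0, z) = frame_sum ip2 (fun n => (g n).2) z.
    by apply: eq_eseriesr => n _; rewrite /ip_sum /= (ip0l h1) add0r.
  by rewrite hp nsq_sum /= (nsq0 h1) add0r.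
- have -> : (fun n => ((g n).1, (g n).2)) = g by apply: funext => n; case: (g n).
  exact: (Kframe_of hs (bounded_sum h1 h2 hK hL) hp).
Qed.
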